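(* Let $V$ be a toroidal vertex algebra. If $(W,Y_W)$ is a $V$-module, then $(W,Y_W')$ is a $V^0$-module (for $V^0$ viewed as a toroidal vertex algebra), where $Y_W'$ is the restriction of $Y_W$ to $V^0$, and it satisfies the condition: for every $v\in V$ and $w\in W$ there exists an integer $k$ such that $$x_0^{k}\,Y_W'(v_{-1,\mathbf{m}}\mathbf{1};x_0,\mathbf{x})w\in \mathbf{x}^{-\mathbf{m}}W[[x_0]]\quad\text{for all }\mathbf{m}\in\mathbb{Z}^r. \qquad( * )$$ Conversely, if $(W,Y_W')$ is a $V^0$-module satisfying condition $( * )$, then $(W,Y_W)$ is a $V$-module, where $$Y_W(v;x_0,\mathbf{x})=\sum_{\mathbf{m}\in\mathbb{Z}^r}Y_W'(v_{-1,\mathbf{m}}\mathbf{1};x_0,\mathbf{x})\quad\text{for }v\in V.$$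
   Context: Fix a positive integer $r$. Write $\mathbf{x}=(x_1,\dots,x_r)$, $\mathbf{x}^{\mathbf{m}}=x_1^{m_1}\cdots x_r^{m_r}$ for $\mathbf{m}\in\mathbb{Z}^r$ (similarly for other variables), $\mathbf{z}\mathbf{y}=(z_1y_1,\dots,z_ry_r)$. For a vector space $W$ put $\mathcal{E}(W,r)=\mathrm{Hom}(W,W[[x_1^{\pm1},\dots,x_r^{\pm1}]]((x_0)))$. A toroidal vertex algebra is a vector space $V$ with a linear map $Y(\cdot;x_0,\mathbf{x}):V\to\mathcal{E}(V,r)$, $v\mapsto\sum_{(m_0,\mathbf{m})\in\mathbb{Z}\times\mathbb{Z}^r}v_{m_0,\mathbf{m}}x_0^{-m_0-1}\mathbf{x}^{-\mathbf{m}}$, and a vector $\mathbf{1}$ with $Y(\mathbf{1};x_0,\mathbf{x})v=v$, $Y(v;x_0,\mathbf{x})\mathbf{1}\in V[[x_0,x_1^{\pm1},\dots,x_r^{\pm1}]]$ for all $v$, and the Jacobi identity $$z_0^{-1}\delta\!\left(\tfrac{x_0-y_0}{z_0}\right)Y(u;x_0,\mathbf{z}\mathbf{y})Y(v;y_0,\mathbf{y})-z_0^{-1}\delta\!\left(\tfrac{y_0-x_0}{-z_0}\right)Y(v;y_0,\mathbf{y})Y(u;x_0,\mathbf{z}\mathbf{y})=y_0^{-1}\delta\!\left(\tfrac{x_0-z_0}{y_0}\right)Y(Y(u;z_0,\mathbf{z})v;y_0,\mathbf{y})$$ for all $u,v\in V$, where $Y(u;x_0,\mathbf{z}\mathbf{y})=\sum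 u_{m_0,\mathbf{m}}x_0^{-m_0-1}\mathbf{z}^{-\mathbf{m}}\mathbf{y}^{-\mathbf{m}}$. A module for a toroidal vertex algebra $V$ is a vector space $W$ with a linear map $Y_W:V\to\mathcal{E}(W,r)$, $Y_W(\mathbf{1};x_0,\mathbf{x})=1_W$, satisfying the Jacobi identity with $Y$ replaced by $Y_W$ in the three outer operator places. $V^0=\mathrm{span}\{v_{m_0,\mathbf{m}}\mathbf{1}\}$ is a toroidal vertex subalgebra of $V$. *)

(* Defs.v *)
From HB Require Import structures.
From mathcomp Require Import all_boot all_order all_algebra.
Set Implicit Arguments. Unset Strict Implicit. Unset Printing Implicit Defensive.
Import Order.TTheory GRing.Theory Num.Theory.
Local Open Scope ring_scope.

Definition idx (r : nat) := 'rV[int]_r.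

Definition zbin (n : int) (i : nat) : int :=
  divz (\prod_(j < i) (n - (nat_of_ord j)%:Z)) (i`!)%:Z.

Section Defs.
Variables (K : fieldType) (r : nat).

(* A "vertex operator map" Y : V -> E(W,r), given by its coefficients:
   Y v n m w = v_{n,m} w, the coefficient of x0^{-n-1} x^{-m} in Y(v;x0,x)w. *)
Definition vop (V W : lmodType K) := V -> int -> idx r -> W -> W.

Definition coef_linear (V W : lmodType K) (Y : vop V W) (P : V -> Prop) :=
  (forall u v a n m w, P u -> P v ->
      Y (a *: u + v) n m w = a *: Y u n m w + Y v n m w) /\
  (forall v n m a w w', P v ->
      Y v n m (a *: w + w') = a *: Y v n m w + Y v n m w').

(* Y(v;x0,x)w lies in W[[x^{+-1}]]((x0)) *)
Definition truncated (V W : lmodType K) (Y : vop V W) (P : V -> Prop) :=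
  forall v w, P v -> exists N : int, forall n m, N <= n -> Y v n m w = 0.

Definition vacuum_id (V W : lmodType K) (Y : vop V W) (one : V) :=
  forall n m w, Y one n m w = if (n == -1) && (m == 0) then w else 0.

(* The Jacobi identity, for u, v in P: equality of the coefficients of
   z0^{-l-1} x0^{-a-1} y0^{-b-1} z^{-m} y^{-p} of the three terms, obtained by
   expanding the delta functions
     z0^{-1} d((x0-y0)/z0)   = sum_l z0^{-l-1} sum_i binom(l,i) (-1)^i x0^{l-i} y0^i
     z0^{-1} d((y0-x0)/-z0)  = sum_l (-1)^l z0^{-l-1} sum_i binom(l,i) (-1)^i y0^{l-i} x0^i
     y0^{-1} d((x0-z0)/y0)   = sum_n y0^{-n-1} sum_i binom(n,i) (-1)^i x0^{n-i} z0^i.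
   Each of the three infinite sums over i has only finitely many nonzero terms
   (by truncation), so equality of the sums is expressed as equality of the
   partial sums for all large enough N. *)
Definition jacobi (V W : lmodType K) (Yi : vop V V) (Yo : vop V W) (P : V -> Prop) :=
  forall u v, P u -> P v -> forall (w : W) (l a b : int) (m p : idx r),
  exists N0 : nat, forall N : nat, (N0 <= N)%N ->
    \sum_(i < N) ((-1) ^+ i * zbin l i)%:~R *:
        Yo u (l + a - (nat_of_ord i)%:Z) m (Yo v (b + (nat_of_ord i)%:Z) (p - m) w)
  - \sum_(i < N) ((-1) ^ l * (-1) ^+ i * zbin l i)%:~R *:
        Yo v (l + b - (nat_of_ord i)%:Z) (p - m) (Yo u (a + (nat_of_ord i)%:Z) m w)
  = \sum_(i < N) ((-1) ^+ i * zbin ((nat_of_ord i)%:Z - a - 1) i)%:~R *: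
        Yo (Yi u (l + (nat_of_ord i)%:Z) m v) (a + b - (nat_of_ord i)%:Z) p w.

Definition is_TVA (V : lmodType K) (Y : vop V V) (one : V) :=
  [/\ coef_linear Y (fun _ => True), truncated Y (fun _ => True), vacuum_id Y one,
      (forall v n m, 0 <= n -> Y v n m one = 0)  (* Y(v;x0,x)1 in V[[x0,x^{+-1}]] *)
    & jacobi Y Y (fun _ => True)].

(* (W, YW) is a module for the toroidal vertex subalgebra of (V,Y,one) with
   underlying subspace P (YW only matters on P) *)
Definition is_module_on (V W : lmodType K) (Y : vop V V) (one : V)
    (P : V -> Prop) (YW : vop V W) :=
  [/\ coef_linear YW P, truncated YW P, vacuum_id YW one & jacobi Y YW P].

Definition is_module (V W : lmodType K) (Y : vop V V) (one : V) (YW : vop V W) :=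
  is_module_on Y one (fun _ => True) YW.

Definition inV0 (V : lmodType K) (Y : vop V V) (one : V) (v : V) :=
  exists s : seq (K * V * int * idx r),
    v = \sum_(t <- s) t.1.1.1 *: Y t.1.1.2 t.1.2 t.2 one.

(* condition (star): for all v, w there is k : int with
   x0^k YW'(v_{-1,m} 1; x0, x) w in x^{-m} W[[x0]] for all m, i.e. the
   coefficient of x0^{-n-1} x^{-m'} vanishes unless m' = m and n < k. *)
Definition cond_star (V W : lmodType K) (Y : vop V V) (one : V) (YW' : vop V W) :=
  forall (v : V) (w : W), exists k : int, forall (m m' : idx r) (n : int),
    (m' != m) || (k <= n) -> YW' (Y v (-1) m one) n m' w = 0.

Definition fsum_eq (W : lmodType K) (f : idx r -> W) (s : W) :=
  exists S : seq (idx r),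
    [/\ uniq S, (forall m, m \notin S -> f m = 0) & s = \sum_(m <- S) f m].

End Defs.

(* Main.v *)
Require Import Defs.
From HB Require Import structures.
From mathcomp Require Import all_boot all_order all_algebra.
From mathcomp Require Import zify.
Import Order.TTheory GRing.Theory Num.Theory.
Local Open Scope ring_scope.

Lemma Yo0l {K : fieldType} {r : nat} {V W : lmodType K} {Yo : @vop K r V W} {P : V -> Prop} :
  coef_linear Yo P -> P 0 -> forall n m w, Yo 0 n m w = 0.
Proof.
move=> [l1 _] P0 n m w; have := l1 0 0 1 n m w P0 P0.
rewrite !scale1r addr0 => h.
apply: (addrI (Yo 0 n m w)); rewrite addr0. rewrite -h.
by [].
Qed.

Lemma Yo0r {K : fieldType} {r : nat} {V W : lmodType K} {Yo : @vop K r V W} {P : V -> Prop} :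
  coef_linear Yo P -> forall v n m, P v -> Yo v n m 0 = 0.
Proof.
move=> [_ l2] v n m Pv; have := l2 v n m 1 0 0 Pv.
rewrite !scale1r addr0 => h.
apply: (addrI (Yo v n m 0)); rewrite addr0. rewrite -h.
by [].
Qed.

Lemma zbin0 n : zbin n 0 = 1.
Proof. by rewrite /zbin big_ord0. Qed.

Lemma sum_head {W : zmodType} {N : nat} (F : 'I_N.+1 -> W) :
  (forall i : 'I_N.+1, (0 < i)%N -> F i = 0) -> \sum_(i < N.+1) F i = F ord0.
Proof.
move=> H; rewrite big_ord_recl big1 ?addr0 // => j _; exact: H.
Qed.

Lemma lemA {K : fieldType} {r : nat} {V W : lmodType K} {Y : @vop K r V V} {one : V}
  {Yo : @vop K r V W} :
  is_TVA Y one -> coef_linear Yo (fun _ => True) -> vacuum_id Yo one ->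
  jacobi Y Yo (fun _ => True) ->
  forall u m m' n w, Yo (Y u (-1) m one) n m' w = if m' == m then Yo u n m w else 0.
Proof.
move=> [lY _ _ cY _] lo vac jac u m m' n w.
have [N0 HN] := jac u one I I w (-1) n 0 m m'.
have := HN N0.+1 (leqnSn _).
rewrite sum_head; last first.
  move=> i hi; rewrite vac.
  case: eqP => [hh|_]; first by move: hh; lia.
  by rewrite /= (Yo0r lo) // scaler0.
rewrite sum_head; last first.
  move=> i hi; rewrite vac.
  case: eqP => [hh|_]; first by move: hh; lia.
  by rewrite /= scaler0.
rewrite sum_head; last first.
  move=> i hi; rewrite cY; last by lia.
  by rewrite (Yo0l lo) // scaler0.
rewrite /= !zbin0 !expr0 !mulr1 !vac.
have -> : ((-1) ^ (-1) : int) = -1 by [].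
have -> : (0 + 0%N%:Z == -1 :> int) = false by [].
have -> : (-1 + 0 - 0%N%:Z == -1 :> int) = true by [].
rewrite subr_eq0 /= (Yo0r lo) // scaler0 sub0r scale1r.
have -> : (-1 + 0%N%:Z = -1 :> int) by [].
have -> : (n + 0 - 0%N%:Z = n :> int) by rewrite addr0 subr0.
have -> : (n + 0%N%:Z = n :> int) by rewrite addr0.
case: eqP => [->|_] <-.
  by rewrite scaleN1r opprK.
by rewrite scaler0 oppr0.
Qed.

Lemma zbin_van (k : nat) : (0 < k)%N -> zbin (k%:Z - 0 - 1) k = 0.
Proof.
case: k => [//|k] _; rewrite /zbin big_ord_recr /=.
have -> : ((k.+1)%:Z - 0 - 1 - k%:Z) = 0 by lia.
by rewrite mulr0 div0z.
Qed.

Lemma lemB {K : fieldType} {r : nat} {V : lmodType K} {Y : @vop K r V V} {one : V} :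
  is_TVA Y one ->
  forall u v j m p, Y u j m (Y v (-1) (p - m) one) = Y (Y u j m v) (-1) p one.
Proof.
move=> [lY _ _ cY jac] u v j m p.
have [N0 HN] := jac u v I I one j 0 (-1) m p.
have := HN N0.+1 (leqnSn _).
rewrite sum_head; last first.
  move=> i hi; rewrite (cY v); last by lia.
  by rewrite (Yo0r lY) // scaler0.
rewrite big1; last first.
  move=> i _; rewrite (cY u); last by lia.
  by rewrite (Yo0r lY) // scaler0.
rewrite sum_head; last first.
  move=> i hi; rewrite zbin_van // mulr0 scale0r //.
rewrite /= !zbin0 !expr0 !mulr1 subr0 scale1r scale1r.
have -> : (j + 0 - 0%N%:Z = j :> int) by rewrite addr0 subr0.
have -> : (-1 + 0%N%:Z = -1 :> int) by rewrite addr0.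
have -> : (j + 0%N%:Z = j :> int) by rewrite addr0.
move=> h; exact: h.
Qed.

From Stdlib Require Import FunctionalExtensionality.

Lemma inV0_gen (K : fieldType) (r : nat) (V : lmodType K) (Y : @vop K r V V) (one : V) v n m :
  inV0 Y one (Y v n m one).
Proof. by exists [:: (1, v, n, m)]; rewrite big_seq1 scale1r. Qed.

Lemma inV0_0 (K : fieldType) (r : nat) (V : lmodType K) (Y : @vop K r V V) (one : V) :
  inV0 Y one 0.
Proof. by exists [::]; rewrite big_nil. Qed.

Lemma YWE {K : fieldType} {r : nat} {V W : lmodType K} {Y : @vop K r V V} {one : V}
  {YW' : @vop K r V W} : cond_star Y one YW' ->
  forall v n m w s, fsum_eq (fun m' => YW' (Y v (-1) m' one) n m w) s ->
  s = YW' (Y v (-1) m one) n m w.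
Proof.
move=> cs v n m w s [S [uS supp ->]].
have [k hk] := cs v w.
have z : forall m', m' != m -> YW' (Y v (-1) m' one) n m w = 0.
  by move=> m' hm; apply: hk; rewrite eq_sym hm.
case: (boolP (m \in S)) => hmS.
  rewrite (big_rem m) //= big1_seq ?addr0 // => x /andP[_ hx].
  apply: z; apply/eqP => e; move: hx; rewrite e.
  by rewrite mem_rem_uniqF.
rewrite big1_seq ?supp // => x /andP[_ hx]; apply: z.
by apply/eqP => e; move: hx; rewrite e (negbTE hmS).
Qed.

Theorem proposition2p11 (K : fieldType) (r : nat) (V W : lmodType K)
    (Y : @vop K r V V) (one : V) :
  is_TVA Y one ->
  (forall YW : @vop K r V W, is_module Y one YW ->
      is_module_on Y one (inV0 Y one) YW /\ cond_star Y one YW) /\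
  (forall YW' : @vop K r V W,
      is_module_on Y one (inV0 Y one) YW' -> cond_star Y one YW' ->
      (exists YW : @vop K r V W, forall v n m w,
          fsum_eq (fun m' => YW' (Y v (-1) m' one) n m w) (YW v n m w)) /\
      (forall YW : @vop K r V W,
          (forall v n m w,
             fsum_eq (fun m' => YW' (Y v (-1) m' one) n m w) (YW v n m w)) ->
          is_module Y one YW)).
Proof.
move=> TVA; have [lY tY vY cY jY] := TVA; split.
  move=> YW [lW tW vW jW]; split.
    split => //.
    - by case: lW => l1 l2; split => *; [apply: l1|apply: l2].
    - by move=> v w _; exact: tW v w I.
    - by move=> u v _ _; exact: jW u v I I.
  move=> v w; have [N HN] := tW v w I; exists N => m m' n /orP [hm|hn].
    by rewrite (lemA TVA lW vW jW) (negbTE hm).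
  by rewrite (lemA TVA lW vW jW); case: eqP => // _; exact: HN.
move=> YW' [[l1 l2] tW' vW' jW'] cs; split.
  exists (fun v n m w => YW' (Y v (-1) m one) n m w) => v n m w.
  exists [:: m]; split => //; last by rewrite big_seq1.
  move=> m'; rewrite mem_seq1 => hm.
  have [k hk] := cs v w; by apply: hk; rewrite eq_sym hm.
move=> YW hYW.
have eYW : YW = fun v n m w => YW' (Y v (-1) m one) n m w.
  apply: functional_extensionality_dep => v0.
  apply: functional_extensionality_dep => n0.
  apply: functional_extensionality_dep => m0.
  apply: functional_extensionality_dep => w0.
  exact: (YWE cs _ _ _ _ _ (hYW v0 n0 m0 w0)).
subst YW; split.
- split.
    move=> u v a n m w _ _ /=.
    by rewrite (proj1 lY) // l1 //; apply: inV0_gen.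
  by move=> v n m a w w' _ /=; rewrite l2 //; apply: inV0_gen.
- move=> v w _; have [k hk] := cs v w; exists k => n m hn /=.
  by apply: hk; rewrite hn orbT.
- move=> n m w /=; rewrite vY eqxx /=.
  case: (m =P 0) => [->|hm]; first by rewrite vW' eqxx.
  rewrite (Yo0l (conj l1 l2)); last exact: inV0_0.
  by rewrite andbF.
- move=> u v _ _ w l a b m p.
  have [N0 HN] := jW' (Y u (-1) m one) (Y v (-1) (p - m) one)
     (inV0_gen _ _ _ _ _ _ _ _) (inV0_gen _ _ _ _ _ _ _ _) w l a b m p.
  exists N0 => N hN /=; rewrite HN //; apply: eq_bigr => i _.
  by rewrite (lemA TVA lY vY jY) eqxx (lemB TVA).
Qed.
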